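(* Let $r\ge2$ be even and let $S=(x_1,x_2,x_3)$ be a sequence in $U(2^r)$ with $x_i\equiv 1\pmod 4$ for $i=1,2,3$ (i.e. its image under $f_{2^r,4}$ is $(1,1,1)$). Then $S$ has no $S(2^r)^*$-weighted zero-sum subsequence.
   Context: For a natural number $m$, $\mathbb Z_m=\mathbb Z/m\mathbb Z$, $U(m)$ its group of units, $S(m)=\{x^2:x\in\mathbb Z_m\}$, $S(m)^*=S(m)\setminus\{0\}$. For $m\mid n$, $f_{n,m}$ is the natural map $\mathbb Z_n\to\mathbb Z_m$. For $A\subseteq\mathbb Z_m$, a sequence $(y_1,\dots,y_k)$ ($k\ge1$) is an $A$-weighted zero-sum sequence if there exist $a_i\in A$ with $\sum a_iy_i=0$; a sequence has an $A$-weighted zero-sum subsequence if some nonempty subsequence is an $A$-weighted zero-sum sequence. *)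

(* Defs.v *)
From mathcomp Require Import all_boot all_order all_algebra.
Set Implicit Arguments. Unset Strict Implicit. Unset Printing Implicit Defensive.
Import GRing.Theory.
Local Open Scope ring_scope.

(* Z_m is modelled by 'Z_m; only used for m >= 2 (here m = 2^r, r >= 2). *)

Definition fnm (n m : nat) (x : 'Z_n) : 'Z_m := (nat_of_ord x)%:R.

Definition Ssq (m : nat) : pred 'Z_m := fun a => [exists x : 'Z_m, a == x * x].

Definition Ssq_star (m : nat) : pred 'Z_m := fun a => (a != 0) && Ssq a.

Definition weighted_zero_sum (m : nat) (A : pred 'Z_m) (y : seq 'Z_m) : Prop :=
  (0 < size y)%N /\
  exists a : seq 'Z_m, size a = size y /\ all A a /\
    \sum_(i < size y) a`_i * y`_i = 0.

Definition has_weighted_zero_sum_subseq (m : nat) (A : pred 'Z_m) (y : seq 'Z_m) : Prop :=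
  exists t : seq 'Z_m, subseq t y /\ weighted_zero_sum A t.

(* Main.v *)
Require Import Defs.
From mathcomp Require Import all_boot all_order all_algebra.
From mathcomp Require Import zify.

Lemma core k h (J T : 'I_k -> nat) : 0 < k <= 3 ->
  (forall i, T i %% 4 = 1) -> (forall i, J i < h) ->
  ~~ (4 ^ h %| \sum_i 4 ^ (J i) * T i).
Proof.
case/andP=> k0 k3 HT HJ.
pose i0 := Ordinal k0.
case: (arg_minnP J (isT : predT i0)) => im _ Hmin.
set j0 := J im.
have E : \sum_i 4 ^ (J i) * T i = 4 ^ j0 * \sum_i 4 ^ (J i - j0) * T i.
  rewrite big_distrr; apply: eq_bigr => i _.
  rewrite /=. by rewrite mulnA -expnD subnKC // Hmin.
set S := \sum_i 4 ^ (J i - j0) * T i.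
have HS : S %% 4 = (\sum_i ((J i == j0) : nat)) %% 4.
  rewrite /S -modn_summ; congr (_ %% 4); apply: eq_bigr => i _.
  case: eqP => [->|ne]; first by rewrite subnn expn0 mul1n HT.
  have : 0 < J i - j0 by have := Hmin i isT; rewrite -/j0; lia.
  case: (J i - j0) => // m _.
  by rewrite expnS -mulnA mulnC modnMl.
have B1 : 1 <= \sum_i ((J i == j0) : nat).
  by rewrite (bigD1 im) //= eqxx.
have B2 : \sum_i ((J i == j0) : nat) <= 3.
  apply: leq_trans k3; rewrite -[X in _ <= X]card_ord -sum1_card.
  by apply: leq_sum => i _; case: (_ == _).
rewrite E.
have hj : h = j0 + (h - j0 - 1).+1 by have := HJ im; lia.
rewrite hj expnD dvdn_pmul2l ?expn_gt0 //.
apply/negP => D.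
have D4 : 4 %| S by apply: dvdn_trans D; rewrite expnS dvdn_mulr.
move: D4; rewrite /dvdn HS; lia.
Qed.


Lemma valZ4 n (y : 'Z_n) : fnm 4 y = 1%R -> nat_of_ord y %% 4 = 1.
Proof. rewrite /fnm => H; have := val_Zp_nat (isT : 1 < 4) (nat_of_ord y). by rewrite H. Qed.

Lemma sqodd q : (1 + q * 2) * (1 + q * 2) = (q * q + q) * 4 + 1.
Proof. nia. Qed.

Lemma bridge h (a y : 'Z_(4 ^ h)) : 0 < h -> Ssq_star a -> nat_of_ord y %% 4 = 1 ->
  exists2 j, j < h & exists t, t %% 4 = 1 /\ (nat_of_ord a * nat_of_ord y) %% 4 ^ h = (4 ^ j * t) %% 4 ^ h.
Proof.
move=> h0 /andP[a0 /existsP[x /eqP ax]] Hy.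
have n1 : 1 < 4 ^ h by rewrite -{1}(expn0 4) ltn_exp2l.
have va : nat_of_ord a = (nat_of_ord x * nat_of_ord x) %% 4 ^ h.
  by rewrite ax -[x]natr_Zp -GRing.natrM val_Zp_nat // natr_Zp.
set v := nat_of_ord x in va.
have v0 : 0 < v.
  rewrite lt0n; apply/negP => /eqP v0; move/eqP: (a0) => a0'; apply: a0'; apply: ord_inj. by rewrite va v0 muln0 mod0n.
case: (pfactor_coprime (isT : prime 2) v0) => o; rewrite coprime_sym coprimen2 => oo vE.
set e := logn 2 v in vE.
have vv : v * v = 4 ^ e * (o * o).
  by rewrite vE (_ : 4 = 2 * 2) // expnMn mulnACA mulnC.
have eh : e < h.
  rewrite ltnNge; apply/negP => he; move: a0; apply/negP; apply/negPn/eqP.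
  apply: ord_inj; rewrite /= va vv; apply/eqP; change (4^h %| 4^e*(o*o)).
  by apply: dvdn_mulr; apply: dvdn_exp2l.
exists e => //; exists (o * o * nat_of_ord y); split.
  rewrite -modnMmr Hy muln1.
  have oE := odd_double_half o; rewrite oo in oE.
  have -> : o * o = (o./2 * o./2 + o./2) * 4 + 1.
    rewrite -{1 2}oE; move: (o./2) => q; rewrite -!muln2 /=; apply: sqodd.
  by rewrite modnMDl.
by rewrite va modnMml vv -mulnA.
Qed.

Lemma mainZ h (s : seq 'Z_(4 ^ h)) : 0 < h -> size s <= 3 ->
  (forall y, y \in s -> nat_of_ord y %% 4 = 1) ->
  ~ weighted_zero_sum (@Ssq_star _) s.
Proof.
move=> h0 s3 Hs [k0 [a [sa [alla Hsum]]]].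
have n1 : 1 < 4 ^ h by rewrite -{1}(expn0 4) ltn_exp2l.
have H : forall i : 'I_(size s), exists p : nat * nat, p.1 < h /\ p.2 %% 4 = 1 /\
   (nat_of_ord (nth 0%R a i) * nat_of_ord (nth 0%R s i)) %% 4 ^ h = (4 ^ p.1 * p.2) %% 4 ^ h.
  move=> i.
  have ai : Ssq_star (nth 0%R a i) by apply: (allP alla); apply: mem_nth; rewrite sa.
  have yi : nat_of_ord (nth 0%R s i) %% 4 = 1 by apply: Hs; apply: mem_nth.
  case: (@bridge h _ _ h0 ai yi) => j jh [t [t4 E]].
  by exists (j, t).
case: (fin_all_exists H) => f Hf.
have C := @core (size s) h (fun i => (f i).1) (fun i => (f i).2).
apply: (elimT negP (C _ _ _)).
- by rewrite k0.
- by move=> i; case: (Hf i) => _ [].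
- by move=> i; case: (Hf i).
have E1 : (\sum_(i < size s) nat_of_ord (nth 0%R a i) * nat_of_ord (nth 0%R s i)) %% 4 ^ h = 0.
  have := congr1 (@nat_of_ord _) Hsum.
  have -> : (\sum_(i < size s) (nth 0%R a i) * (nth 0%R s i))%R = ((\sum_(i < size s) nat_of_ord (nth 0%R a i) * nat_of_ord (nth 0%R s i))%N%:R)%R.
    rewrite GRing.natr_sum; apply: eq_bigr => i _.
    by rewrite GRing.natrM !natr_Zp.
  by rewrite val_Zp_nat.
rewrite /dvdn; apply/eqP.
rewrite -modn_summ.
rewrite (eq_bigr (fun i : 'I_(size s) => (nat_of_ord (nth 0%R a i) * nat_of_ord (nth 0%R s i)) %% 4 ^ h)); last first.
  by move=> i _; case: (Hf i) => _ [_ ->].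
by rewrite modn_summ E1.
Qed.

Local Open Scope ring_scope.

Theorem mainTheorem7 (r : nat) (hr : (2 <= r)%N) (hev : ~~ odd r)
  (x1 x2 x3 : 'Z_(2 ^ r))
  (hu1 : x1 \is a GRing.unit) (hu2 : x2 \is a GRing.unit) (hu3 : x3 \is a GRing.unit)
  (h1 : fnm 4 x1 = 1) (h2 : fnm 4 x2 = 1) (h3 : fnm 4 x3 = 1) :
  ~ has_weighted_zero_sum_subseq (@Ssq_star (2 ^ r)) [:: x1; x2; x3].
Proof.
move=> [t [sub wz]].
have Hs : forall y, y \in t -> (nat_of_ord y %% 4 = 1)%N.
  move=> y /(mem_subseq sub); rewrite !inE => /or3P[] /eqP ->; exact: valZ4.
have st : (size t <= 3)%N by apply: (size_subseq sub).
have hE := odd_double_half r; rewrite (negbTE hev) add0n in hE.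
have E : (2 ^ r = 4 ^ r./2)%N by rewrite -{1}hE -muln2 mulnC expnM.
have h0 : (0 < r./2)%N by rewrite -hE in hr; lia.
move: t Hs st wz {sub}; rewrite E => t Hs st wz.
have M := @mainZ (r./2) t h0 st. apply: M wz. exact: Hs.
Qed.
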